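(* Let $n\ge 2$ and $\sigma\ge 0$. The matrix $\mathbf A_\sigma^{-1}\mathbf B$ is diagonalizable over $\mathbb R$, so its eigenvectors form a basis of $\mathbb R^n$. Its eigenvalues are real and, ordered decreasingly, satisfy $$1\ \ge\ \lambda_1(\mathbf A_\sigma^{-1}\mathbf B)\ \ge\ \dots\ \ge\ \lambda_{n-1}(\mathbf A_\sigma^{-1}\mathbf B)\ >\ 0\ >\ \lambda_n(\mathbf A_\sigma^{-1}\mathbf B)\ \ge\ -1 .$$ In particular, $\mathbf A_\sigma^{-1}\mathbf B$ has exactly one negative eigenvalue.
   Context: Let $\mathbf L\in\mathbb R^{n\times n}$ be the periodic discrete one-dimensional Laplacian, i.e. $(\mathbf L\mathbf x)_i=x_{i-1}-2x_i+x_{i+1}$ with indices taken modulo $n$. For $n\ge3$ this is the circulant matrix with $-2$ on the diagonal and $1$ on the sub- and superdiagonal and in the corners $(1,n),(n,1)$. For $\sigma\ge 0$ set $\mathbf A_\sigma=\mathbf I-\sigma\mathbf L$, which is symmetric positive definite. Let $\mathbf B=\mathrm{diag}(1,\dots,1,-1)\in\mathbb R^{n\times n}$. *)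

(* Defs.v *)
From HB Require Import structures.
From mathcomp Require Import all_boot all_order all_algebra.
Set Implicit Arguments. Unset Strict Implicit. Unset Printing Implicit Defensive.
Import Order.TTheory GRing.Theory Num.Theory.
Local Open Scope ring_scope.

(* Periodic discrete 1D Laplacian: (L x)_i = x_{i-1} - 2 x_i + x_{i+1},
   indices modulo n (ord_pred / ordS are the cyclic predecessor/successor). *)
Definition perLap (R : nzRingType) (n : nat) : 'M[R]_n :=
  \matrix_(i < n, j < n)
    ((j == ord_pred i)%:R - 2%:R * (j == i)%:R + (j == ordS i)%:R).

Definition Asig (R : nzRingType) (n : nat) (sigma : R) : 'M[R]_n :=
  1%:M - sigma *: perLap R n.

Definition Bmat (R : nzRingType) (n : nat) : 'M[R]_n :=
  diag_mx (\row_(i < n) (if (i : nat) == n.-1 then -1 else 1)).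

(* Main.v *)
Require Import Defs.
From HB Require Import structures.
From mathcomp Require Import all_boot all_order all_algebra.
Import Order.TTheory GRing.Theory Num.Theory.
Local Open Scope ring_scope.
From mathcomp Require Import all_fingroup.
From mathcomp Require Import ring lra complex.
Set Implicit Arguments. Unset Strict Implicit. Unset Printing Implicit Defensive.

Lemma sum_delta_l (K : nzSemiRingType) n (k : 'I_n) (f : 'I_n -> K) :
  \sum_j (j == k)%:R * f j = f k.
Proof.
rewrite (bigD1 k) //= eqxx mul1r big1 ?addr0 // => j /negPf ->.
by rewrite mul0r.
Qed.

Lemma perLap_col (K : comNzRingType) n (v : 'rV[K]_n) i :
  (perLap K n *m v^T) i 0 = v 0 (ord_pred i) - 2%:R * v 0 i + v 0 (ordS i).
Proof.
rewrite mxE.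
under eq_bigr => j _ do rewrite !mxE mulrDl mulrBl -mulrA.
rewrite big_split sumrB /= !sum_delta_l -mulr_sumr sum_delta_l //.
Qed.

Lemma lap_form (K : comNzRingType) n (u v : 'rV[K]_n) :
  (u *m perLap K n *m v^T) 0 0 =
  - \sum_i (u 0 (ordS i) - u 0 i) * (v 0 (ordS i) - v 0 i).
Proof.
rewrite -mulmxA mxE.
under eq_bigr => i _ do rewrite perLap_col.
have E1 : \sum_i u 0 i * v 0 (ord_pred i) = \sum_i u 0 (ordS i) * v 0 i.
  rewrite (reindex_inj (can_inj (@ordSK n))) /=.
  by apply: eq_bigr => i _; rewrite ordSK.
have E2 : \sum_i u 0 (ordS i) * v 0 (ordS i) = \sum_i u 0 i * v 0 i.
  by rewrite [RHS](reindex_inj (can_inj (@ordSK n))).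
have L : \sum_i u 0 i * (v 0 (ord_pred i) - 2%:R * v 0 i + v 0 (ordS i)) =
   \sum_i u 0 i * v 0 (ord_pred i) - 2%:R * \sum_i u 0 i * v 0 i
   + \sum_i u 0 i * v 0 (ordS i).
  rewrite mulr_sumr -sumrB -big_split /=; apply: eq_bigr => i _; ring.
have Rh : \sum_i (u 0 (ordS i) - u 0 i) * (v 0 (ordS i) - v 0 i) =
   \sum_i u 0 (ordS i) * v 0 (ordS i) - \sum_i u 0 (ordS i) * v 0 i
   - \sum_i u 0 i * v 0 (ordS i) + \sum_i u 0 i * v 0 i.
  rewrite -!sumrB -big_split /=; apply: eq_bigr => i _; ring.
rewrite L Rh E1 E2; ring.
Qed.

Lemma Asig_form (K : comNzRingType) n (s : K) (u v : 'rV[K]_n) :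
  (u *m Asig n s *m v^T) 0 0 =
  \sum_i u 0 i * v 0 i +
  s * \sum_i (u 0 (ordS i) - u 0 i) * (v 0 (ordS i) - v 0 i).
Proof.
rewrite /Asig mulmxBr mulmx1 -scalemxAr mulmxBl -scalemxAl.
rewrite mxE [X in _ + X]mxE [X in _ + - X]mxE lap_form mulrN opprK; congr (_ + _).
by rewrite mxE; apply: eq_bigr => i _; rewrite mxE.
Qed.

Lemma perLap_tr (K : nzRingType) n : (perLap K n)^T = perLap K n.
Proof.
apply/matrixP => i j; rewrite !mxE.
have E1 : (i == ord_pred j) = (j == ordS i).
  by apply/eqP/eqP; [move=> ->; rewrite ord_predK|move=> ->; rewrite ordSK].
have E2 : (i == ordS j) = (j == ord_pred i).
  by apply/eqP/eqP; [move=> ->; rewrite ordSK|move=> ->; rewrite ord_predK].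
by rewrite E1 E2 (eq_sym i j) addrC addrA addrAC.
Qed.

Lemma Asig_tr (K : nzRingType) n (s : K) : (Asig n s)^T = Asig n s.
Proof. by rewrite /Asig linearB /= linearZ /= tr_scalar_mx perLap_tr. Qed.

Lemma Bmat_tr (K : nzRingType) n : (Bmat K n)^T = Bmat K n.
Proof. by rewrite /Bmat tr_diag_mx. Qed.

Lemma Asig_real_bound (R : realDomainType) n (s : R) (x : 'rV[R]_n) :
  0 <= s -> \sum_i x 0 i ^+ 2 <= (x *m Asig n s *m x^T) 0 0.
Proof.
move=> hs; rewrite Asig_form.
have -> : \sum_i x 0 i * x 0 i = \sum_i x 0 i ^+ 2.
  by apply: eq_bigr => i _; rewrite expr2.
rewrite lerDl mulr_ge0 // sumr_ge0 // => i _.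
by rewrite -expr2 sqr_ge0.
Qed.

Lemma sum_conj_gt0 (C : numClosedFieldType) n (w : 'rV[C]_n) :
  w != 0 -> 0 < \sum_i w 0 i * (w 0 i)^*.
Proof.
move=> wn0; case: (pickP (fun i => w 0 i != 0)) => [i Hi|H]; last first.
  case/negP: wn0; apply/eqP/matrixP => a b; rewrite ord1 mxE.
  by move: (H b) => /negbFE/eqP.
rewrite (bigD1 i) //= ltr_wpDr ?mul_conjC_gt0 //.
by rewrite sumr_ge0 // => j _; rewrite mul_conjC_ge0.
Qed.

Lemma sum_conj_ge0 (C : numClosedFieldType) n (w : 'rV[C]_n) :
  0 <= \sum_i w 0 i * (w 0 i)^*.
Proof. by rewrite sumr_ge0 // => j _; rewrite mul_conjC_ge0. Qed.

Section Cx.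
Variable R : rcfType.
Local Notation C := (R[i]).
Local Notation toC := (real_complex R).

Definition cform n (A : 'M[R]_n) (w : 'rV[C]_n) : C :=
  (w *m map_mx toC A *m (map_mx Num.conj w)^T) 0 0.
Definition cPD n (A : 'M[R]_n) := forall w : 'rV[C]_n, w != 0 -> 0 < cform A w.

Lemma map_Asig n (s : R) : map_mx toC (Asig n s) = Asig n (toC s).
Proof.
apply/matrixP => i j; rewrite !mxE.
by rewrite !(rmorphB, rmorphD, rmorphM, rmorphMn, rmorph1) /=.
Qed.

Lemma toC_real (x : R) : toC x \is Num.real.
Proof. by apply/complex_realP; exists x. Qed.

Lemma Asig_cPD n (s : R) : 0 <= s -> cPD (Asig n s).
Proof.
move=> hs w wn0; rewrite /cform map_Asig Asig_form.
under [X in _ + _ * X]eq_bigr => i _ do rewrite !mxE -rmorphB.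
apply: ltr_wpDr; last first.
  under eq_bigr => i _ do rewrite mxE.
  exact: sum_conj_gt0.
rewrite mulr_ge0 //; first by move: hs; rewrite -ler0c.
by apply: sumr_ge0 => i _; exact: mul_conjC_ge0.
Qed.


Lemma conj_mapC m n (B : 'M[R]_(m, n)) :
  map_mx Num.conj (map_mx toC B) = map_mx toC B.
Proof. by apply/matrixP => i j; rewrite !mxE conj_Creal // toC_real. Qed.

Lemma cform_real n (B : 'M[R]_n) w : B^T = B -> cform B w \is Num.real.
Proof.
move=> sB; apply/CrealP; rewrite /cform.
set wc := map_mx Num.conj w.
have -> : ((w *m map_mx toC B *m wc^T) 0 0)^*
   = (map_mx Num.conj (w *m map_mx toC B *m wc^T)) 0 0.
  by rewrite [RHS]mxE.
have E1 : map_mx Num.conj (w *m map_mx toC B *m wc^T) = wc *m map_mx toC B *m w^T.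
  rewrite !map_mxM conj_mapC; congr (_ *m _).
  by apply/matrixP => i j; rewrite !mxE; apply: conjCK.
rewrite E1.
have -> : (w *m map_mx toC B *m wc^T) 0 0 = ((w *m map_mx toC B *m wc^T)^T) 0 0.
  by rewrite [RHS]mxE.
by rewrite !trmx_mul trmxK map_trmx sB mulmxA.
Qed.

Lemma cPD_unit n (A : 'M[R]_n) : cPD A -> A \in unitmx.
Proof.
move=> hA; apply/negPn/negP => nu.
have : eigenvalue (map_mx toC A) 0.
  rewrite /eigenvalue /eigenspace.
  have -> : (0%:M : 'M[C]_n) = 0 by apply/matrixP=> i j; rewrite !mxE mul0rn.
  rewrite subr0 kermx_eq0 row_free_unit.
  by rewrite map_unitmx.
case/eigenvalueP => w hw wn0.
have := hA w wn0; rewrite /cform hw scale0r !mul0mx mxE ltxx //.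
Qed.

Lemma exists_real_eig n (A B : 'M[R]_n.+1) : B^T = B -> cPD A ->
  exists (l : R) (v : 'rV[R]_n.+1), v != 0 /\ v *m B = l *: (v *m A).
Proof.
move=> sB hA; have Au := cPD_unit hA.
pose M0 := B *m invmx A.
have /closed_rootP [z rz] : size (char_poly (map_mx toC M0)) != 1%N.
  by rewrite size_char_poly.
move: rz; rewrite -eigenvalue_root_char => /eigenvalueP [w hw wn0].
have hw2 : w *m map_mx toC B = z *: (w *m map_mx toC A).
  move: hw; rewrite /M0 map_mxM map_invmx mulmxA => hw.
  by rewrite scalemxAl -hw mulmxKV // map_unitmx.
have hf : cform B w = z * cform A w.
  by rewrite /cform hw2 -!scalemxAl mxE.
have pos := hA w wn0.
have zr : z \is Num.real.
  have -> : z = cform B w / cform A w by rewrite hf mulfK // gt_eqF.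
  by apply: rpredM; [exact: cform_real | rewrite rpredV; exact: gtr0_real pos].
case/complex_realP: zr => l zl; exists l.
have : eigenvalue M0 l.
  rewrite eigenvalue_root_char; apply/rootP.
  apply/eqP; rewrite -(fmorph_eq0 (real_complex R)) -horner_map /= map_char_poly.
  by rewrite -zl; apply/eqP/rootP; rewrite -eigenvalue_root_char; apply/eigenvalueP; exists w.
case/eigenvalueP => v hv vn0; exists v; split => //.
by rewrite scalemxAl -hv /M0 mulmxA mulmxKV.
Qed.

Lemma real_form_pos n (A : 'M[R]_n) (v : 'rV_n) :
  cPD A -> v != 0 -> 0 < (v *m A *m v^T) 0 0.
Proof.
move=> hA vn0.
have := hA (map_mx toC v); rewrite map_mx_eq0 => /(_ vn0).
rewrite /cform conj_mapC map_trmx -!map_mxM mxE => H.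
by rewrite -ltcR.
Qed.

Lemma cPD_W m n (A : 'M[R]_n) (W : 'M[R]_(m, n)) :
  (forall w : 'rV[C]_m, w *m map_mx toC W = 0 -> w = 0) ->
  cPD A -> cPD (W *m A *m W^T).
Proof.
move=> Winj hA w wn0.
have w'n0 : w *m map_mx toC W != 0.
  by apply: contra wn0 => /eqP /Winj ->.
have := hA _ w'n0; congr (0 < _).
rewrite /cform !map_mxM map_trmx conj_mapC.
by rewrite trmx_mul !mulmxA -!map_trmx.
Qed.

Definition Wm n (k : 'I_n.+1) (u : 'cV[R]_n.+1) : 'M[R]_(n, n.+1) :=
  \matrix_(j, i) ((i == lift k j)%:R - (i == k)%:R * (u (lift k j) 0 / u k 0)).

Lemma Wm_u n (k : 'I_n.+1) (u : 'cV[R]_n.+1) : u k 0 != 0 -> Wm k u *m u = 0.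
Proof.
move=> hk; apply/matrixP => j z; rewrite ord1 !mxE.
under eq_bigr => i _ do rewrite !mxE mulrBl -mulrA.
by rewrite sumrB !sum_delta_l mulfVK // subrr.
Qed.

Lemma Wm_inj n (k : 'I_n.+1) (u : 'cV[R]_n.+1) (w : 'rV[C]_n) :
  w *m map_mx toC (Wm k u) = 0 -> w = 0.
Proof.
move=> h; apply/matrixP => z j; rewrite ord1.
have := congr1 (fun M : 'rV[C]_n.+1 => M 0 (lift k j)) h; rewrite !mxE => <-.
under eq_bigr => i _ do rewrite !mxE (inj_eq lift_inj) [lift k j == k]eq_sym (negbTE (neq_lift k j)) eq_sym.
under eq_bigr => i _ do rewrite mul0r subr0 rmorph_nat mulrC.
by rewrite sum_delta_l.
Qed.

Lemma SD n : forall A B : 'M[R]_n, A^T = A -> B^T = B -> cPD A ->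
  exists (P : 'M[R]_n) (d : 'rV[R]_n),
    P *m A *m P^T = 1%:M /\ P *m B *m P^T = diag_mx d.
Proof.
elim: n => [|n IH] A B sA sB hA.
  by exists 0, 0; split; rewrite [LHS]flatmx0 [RHS]flatmx0.
have [l [v0 [v0n0 hv0]]] := exists_real_eig sB hA.
pose c := (v0 *m A *m v0^T) 0 0.
have cpos : 0 < c := real_form_pos hA v0n0.
pose a := (Num.sqrt c)^-1.
pose v := a *: v0.
have hvA : v *m A *m v^T = 1%:M.
  rewrite [LHS]mx11_scalar; congr (_%:M).
  rewrite /v linearZ /= -scalemxAr -!scalemxAl !mxE -/c.
  have sc : Num.sqrt c ^+ 2 = c by rewrite sqr_sqrtr // ltW.
  have sn0 : Num.sqrt c != 0 by rewrite gt_eqF // sqrtr_gt0.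
  rewrite /a mulrA -expr2 exprVn sc.
  have -> : \sum_j (v0 *m A) 0 j * v0^T j 0 = c by rewrite /c [RHS]mxE.
  by rewrite mulVf // gt_eqF.
have hvB : v *m B = l *: (v *m A).
  by rewrite /v -!scalemxAl hv0 !scalerA mulrC.
clearbody v.
pose u := A *m v^T.
have hu : v *m u = 1%:M by rewrite /u mulmxA.
have hudef : A *m v^T = u by [].
clearbody u.
have [k hk] : exists k, u k 0 != 0.
  case: (pickP (fun k => u k 0 != 0)) => [k hk|H]; first by exists k.
  have u0 : u = 0.
    by apply/matrixP => i j; rewrite ord1 [RHS]mxE; apply/eqP/negbFE/H.
  move: hu; rewrite u0 mulmx0 => /matrixP/(_ 0 0); rewrite !mxE eqxx /=.
  by move=> /eqP; rewrite eq_sym oner_eq0.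
pose W := Wm k u.
have Wu : W *m u = 0 := Wm_u hk.
have vAW : v *m A *m W^T = 0.
  have : (W *m u)^T = 0 by rewrite Wu trmx0.
  by rewrite trmx_mul -hudef trmx_mul trmxK sA.
have sA1 : (W *m A *m W^T)^T = W *m A *m W^T by rewrite !trmx_mul trmxK sA mulmxA.
have sB1 : (W *m B *m W^T)^T = W *m B *m W^T by rewrite !trmx_mul trmxK sB mulmxA.
have hA1 : cPD (W *m A *m W^T) := cPD_W (@Wm_inj _ k u) hA.
have [P1 [d1 [h1 h2]]] := IH _ _ sA1 sB1 hA1.
exists (col_mx v (P1 *m W)), (row_mx l%:M d1).
have e1 : v *m A *m (P1 *m W)^T = 0 by rewrite trmx_mul mulmxA vAW mul0mx.
have e2 : P1 *m W *m A *m v^T = 0 by rewrite -!mulmxA hudef Wu !mulmx0.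
have e3 : P1 *m W *m A *m (P1 *m W)^T = 1%:M.
  by rewrite trmx_mul !mulmxA -h1 !mulmxA.
have hBv : B *m v^T = l *: u.
  by rewrite -sB -trmx_mul hvB linearZ /= trmx_mul sA hudef.
rewrite (tr_col_mx v (P1 *m W)) (mul_col_mx v (P1 *m W) A) (mul_col_mx v (P1 *m W) B).
rewrite (mul_col_row (v *m A) (P1 *m W *m A) v^T (P1 *m W)^T).
rewrite (mul_col_row (v *m B) (P1 *m W *m B) v^T (P1 *m W)^T).
split.
  rewrite hvA e1 e2 e3.
  by rewrite [RHS](scalar_mx_block 1 n (1 : R)).
rewrite hvB -!scalemxAl hvA e1 scaler0.
rewrite -!mulmxA hBv -!scalemxAr (mulmxA W) Wu mulmx0 !scaler0 !mulmxA.
have e4 : P1 *m W *m B *m W^T *m P1^T = diag_mx d1.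
  by rewrite -h2 !mulmxA.
rewrite trmx_mul !mulmxA e4 [RHS](diag_mx_row l%:M d1) scalemx1.
have -> : diag_mx (l%:M : 'rV[R]_1) = l%:M.
  by apply/matrixP => i j; rewrite !ord1 !mxE eqxx.
by [].
Qed.

End Cx.

Lemma sort_perm (R : realDomainType) n (f : 'I_n -> R) :
  exists s : 'S_n, forall i j : 'I_n, (i <= j)%N -> f (s j) <= f (s i).
Proof.
case: n f => [|m] f.
  by exists 1%g => i; case: i.
pose r := fun i j : 'I_m.+1 => f j <= f i.
pose ss := sort r (enum 'I_m.+1).
have szs : size ss = m.+1 by rewrite size_sort size_enum_ord.
have us : uniq ss by rewrite sort_uniq enum_uniq.
pose g := fun i : 'I_m.+1 => nth ord0 ss i.
have ginj : injective g.
  move=> i j /eqP; rewrite /g nth_uniq ?szs // => /eqP; exact: val_inj.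
exists (perm ginj) => i j hij; rewrite !permE /g.
have tr : transitive r by move=> x y z; rewrite /r => h1 h2; exact: le_trans h2 h1.
have rf : reflexive r by move=> x; rewrite /r.
have st : sorted r ss by apply: sort_sorted => x y; rewrite /r le_total.
by apply: (sorted_leq_nth tr rf ord0 st) => //; rewrite inE szs.
Qed.

Lemma eig_diag_char (F : fieldType) n (M P : 'M[F]_n) (lam : 'I_n -> F) :
  P \in unitmx -> M *m P = P *m diag_mx (\row_i lam i) ->
  forall a, eigenvalue M a <-> exists i, a = lam i.
Proof.
move=> Pu hMP a; split.
  case/eigenvalueP => v hv vn0.
  pose w := v *m P.
  have hw : w *m diag_mx (\row_i lam i) = a *: w.
    by rewrite /w -mulmxA -hMP mulmxA hv scalemxAl.
  have wn0 : w != 0.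
    apply: contra vn0 => /eqP h; apply/eqP.
    by rewrite -[v](mulmxK Pu) -/w h mul0mx.
  case: (pickP (fun i => w 0 i != 0)) => [i Hi|H]; last first.
    case/negP: wn0; apply/eqP/matrixP => x y; rewrite ord1 [RHS]mxE.
    exact/eqP/negbFE/H.
  exists i; have := congr1 (fun X : 'rV[F]_n => X 0 i) hw.
  rewrite mul_mx_diag mxE [X in _ * X = _]mxE [X in _ = X]mxE => h.
  by apply: (mulfI Hi); rewrite [LHS]mulrC; symmetry; exact: h.
case=> i ->; apply/eigenvalueP.
exists ('e_i *m invmx P); last first.
  apply/negP => /eqP h.
  have := congr1 (mulmx^~ P) h; rewrite mulmxKV // mul0mx => /matrixP/(_ 0 i).
  by rewrite !mxE !eqxx /= => /eqP; rewrite oner_eq0.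
have hM : M = P *m diag_mx (\row_i lam i) *m invmx P by rewrite -hMP mulmxK.
rewrite hM !mulmxA mulmxKV // scalemxAl; congr (_ *m _).
apply/matrixP => x y; rewrite mul_mx_diag !mxE.
case: (eqVneq y i) => [->|yi]; first by rewrite mulrC.
by rewrite andbF mul0r mulr0.
Qed.

Lemma diag_form (K : comNzRingType) n (c d : 'rV[K]_n) :
  (c *m diag_mx d *m c^T) 0 0 = \sum_i c 0 i * c 0 i * d 0 i.
Proof.
rewrite mul_mx_diag mxE; apply: eq_bigr => i _; rewrite !mxE; ring.
Qed.

Lemma Bform (K : comNzRingType) n (x : 'rV[K]_n) :
  (x *m Bmat K n *m x^T) 0 0 =
  \sum_i x 0 i * x 0 i * (if (i : nat) == n.-1 then -1 else 1).
Proof. by rewrite /Bmat diag_form; apply: eq_bigr => i _; rewrite mxE. Qed.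

Lemma qf_row (K : comNzRingType) m n (X : 'M[K]_(m, n)) (A : 'M_n) k :
  (X *m A *m X^T) k k = (row k X *m A *m (row k X)^T) 0 0.
Proof.
rewrite !mxE; apply: eq_bigr => j _; rewrite !mxE; congr (_ * _).
by apply: eq_bigr => l _; rewrite !mxE.
Qed.

Lemma sum_sq_gt0 (R : realDomainType) n (x : 'rV[R]_n) :
  x != 0 -> 0 < \sum_i x 0 i * x 0 i.
Proof.
move=> xn0; case: (pickP (fun i => x 0 i != 0)) => [i Hi|H]; last first.
  case/negP: xn0; apply/eqP/matrixP => a b; rewrite ord1 [RHS]mxE.
  exact/eqP/negbFE/H.
rewrite (bigD1 i) //= ltr_wpDr //; last by rewrite -expr2 lt_def sqrf_eq0 Hi sqr_ge0.
by rewrite sumr_ge0 // => j _; rewrite -expr2 sqr_ge0.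
Qed.

Lemma perm_diag (F : comNzRingType) n (M P : 'M[F]_n) (d : 'rV[F]_n) (s : 'S_n) :
  M *m P = P *m diag_mx d ->
  M *m col_perm s P = col_perm s P *m diag_mx (\row_i d 0 (s i)).
Proof.
move=> h; apply/matrixP => i j; rewrite mul_mx_diag !mxE.
have := congr1 (fun X : 'M[F]_n => X i (s j)) h; rewrite mul_mx_diag !mxE => <-.
by apply: eq_bigr => l _; rewrite !mxE.
Qed.

Unset Implicit Arguments.
Theorem lemma3p1 (R : rcfType) (n : nat) (sigma : R)
    (hn : (2 <= n)%N) (hsigma : 0 <= sigma) :
  let M := invmx (@Asig R n sigma) *m Bmat R n in
  exists (lam : 'I_n -> R) (P : 'M[R]_n),
    (P \in unitmx /\ M *m P = P *m diag_mx (\row_i lam i)) /\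
    (forall a : R, eigenvalue M a <-> exists i, a = lam i) /\
    (forall i j : 'I_n, (i <= j)%N -> lam j <= lam i) /\
    (forall i : 'I_n, lam i <= 1) /\
    (forall i : 'I_n, (i < n.-1)%N -> 0 < lam i) /\
    (forall i : 'I_n, (i : nat) = n.-1 -> lam i < 0 /\ -1 <= lam i) /\
    (exists a : R, (eigenvalue M a /\ a < 0) /\
           forall b : R, eigenvalue M b -> b < 0 -> b = a).
Proof.
move=> M; rewrite {}/M.
have sA : (@Asig R n sigma)^T = Asig n sigma := Asig_tr _ _.
have sB : (Bmat R n)^T = Bmat R n := Bmat_tr _ _.
have hA : cPD (@Asig R n sigma) := Asig_cPD hsigma.
have [P0 [d [h1 h2]]] := SD sA sB hA.
set A := Asig n sigma; set B := Bmat R n.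
have [P0u APu] : P0 \in unitmx /\ (A *m P0^T) \in unitmx.
  by apply: mulmx1_unit; rewrite mulmxA.
have Pcu : P0^T \in unitmx by rewrite unitmx_tr.
have Au : A \in unitmx by move: APu; rewrite unitmx_mul => /andP[].
have APc : A *m P0^T = invmx P0.
  by rewrite -[LHS](mulKmx P0u) (mulmxA P0) h1 mulmx1.
have BP : B *m P0^T = A *m P0^T *m diag_mx d.
  by rewrite APc -h2 !mulmxA mulVmx // mul1mx.
have MP : invmx A *m B *m P0^T = P0^T *m diag_mx d.
  by rewrite -mulmxA BP !mulmxA mulVmx // mul1mx.
have qfP : forall c : 'rV[R]_n,
    (c *m P0 *m B *m (c *m P0)^T) 0 0 = \sum_i c 0 i * c 0 i * d 0 i.
  by move=> c; rewrite trmx_mul !mulmxA -diag_form -h2 !mulmxA.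
have dbound : forall k, -1 <= d 0 k <= 1.
  move=> k; pose p := row k P0.
  have hpA : (p *m A *m p^T) 0 0 = 1 by rewrite -qf_row h1 mxE eqxx.
  have hpB : (p *m B *m p^T) 0 0 = d 0 k by rewrite -qf_row h2 mxE eqxx mulr1n.
  have hb := Asig_real_bound p hsigma; rewrite -/A hpA in hb.
  have e : \sum_i p 0 i ^+ 2 = \sum_i p 0 i * p 0 i.
    by apply: eq_bigr => i _; rewrite expr2.
  rewrite e in hb.
  have lo : - \sum_i p 0 i * p 0 i <= d 0 k.
    rewrite -hpB Bform -sumrN; apply: ler_sum => i _.
    have := sqr_ge0 (p 0 i); rewrite expr2.
    by case: ifP => _; rewrite ?mulrN1 ?mulr1 //; lra.
  have hi : d 0 k <= \sum_i p 0 i * p 0 i.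
    rewrite -hpB Bform; apply: ler_sum => i _.
    have := sqr_ge0 (p 0 i); rewrite expr2.
    by case: ifP => _; rewrite ?mulrN1 ?mulr1 //; lra.
  apply/andP; split; lra.
have hl : (n.-1 < n)%N by rewrite ltn_predL; apply: leq_trans hn.
pose last := Ordinal hl.
have [k0 hk0] : exists k, d 0 k < 0.
  case: (pickP (fun k => d 0 k < 0)) => [k hk|H]; first by exists k.
  pose x : 'rV[R]_n := 'e_last.
  pose c := x *m invmx P0.
  have hx : c *m P0 = x by rewrite /c mulmxKV.
  have := qfP c; rewrite hx Bform.
  have -> : \sum_i x 0 i * x 0 i * (if (i : nat) == n.-1 then -1 else 1) = -1.
    under eq_bigr => i _ do rewrite /x !mxE /= -mulrA.
    by rewrite sum_delta_l eqxx mul1r /= eqxx.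
  move=> e; have : 0 <= \sum_i c 0 i * c 0 i * d 0 i.
    apply: sumr_ge0 => i _; apply: mulr_ge0; first by rewrite -expr2 sqr_ge0.
    by move: (H i) => /negbT; rewrite -leNgt.
  by rewrite -e; lra.
have uniq_np : forall k l, k != l -> d 0 k <= 0 -> d 0 l <= 0 -> False.
  move=> k l kl hk hl2.
  pose p := P0 k last; pose q := P0 l last.
  pose a := if p == 0 then 1 else q.
  pose b := if p == 0 then 0 else - p.
  pose c : 'rV[R]_n := a *: 'e_k + b *: 'e_l.
  have cE : forall i, c 0 i = a * (i == k)%:R + b * (i == l)%:R.
    by move=> i; rewrite !mxE /=.
  have hab : a * p + b * q = 0.
    by rewrite /a /b; case: ifP => [/eqP ->|_]; rewrite ?mul1r ?mul0r ?addr0 //; ring.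
  have cn0 : c != 0.
    apply/negP => /eqP c0.
    case: (eqVneq p 0) => hp.
      have := cE k; rewrite c0 mxE eqxx (negbTE kl) /a /b hp eqxx mulr0 addr0 mulr1.
      by move=> /esym/eqP; rewrite oner_eq0.
    have := cE l; rewrite c0 mxE eqxx eq_sym (negbTE kl) /a /b (negbTE hp).
    by rewrite mulr0 add0r mulr1 => /esym/eqP; rewrite oppr_eq0 (negbTE hp).
  pose x := c *m P0.
  have xn0 : x != 0.
    apply: contra cn0 => /eqP x0; apply/eqP.
    by rewrite -[c](mulmxK P0u) -/x x0 mul0mx.
  have xl : x 0 last = 0.
    rewrite /x /c mulmxDl -!scalemxAl -!rowE !mxE -/p -/q; exact: hab.
  have h1' : 0 < (x *m B *m x^T) 0 0.
    rewrite Bform.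
    have -> : \sum_i x 0 i * x 0 i * (if (i : nat) == n.-1 then -1 else 1)
            = \sum_i x 0 i * x 0 i.
      apply: eq_bigr => i _; case: ifP => [/eqP hi|_]; last by rewrite mulr1.
      have -> : i = last by apply: val_inj.
      by rewrite xl !mul0r.
    exact: sum_sq_gt0.
  have h2' : (x *m B *m x^T) 0 0 <= 0.
    rewrite qfP; apply: sumr_le0 => i _; rewrite cE.
    case: (eqVneq i k) => [->|ik].
      rewrite mulr_ge0_le0 //; first by rewrite -expr2 sqr_ge0.
    case: (eqVneq i l) => [->|il].
      rewrite mulr_ge0_le0 //; first by rewrite -expr2 sqr_ge0.
    by rewrite !mulr0 !addr0 !mul0r.
  by move: h1'; rewrite ltNge h2'.
have [s hs] := sort_perm (fun i => d 0 i).
pose lam := fun i => d 0 (s i).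
pose Pf := col_perm s P0^T.
have Pfu : Pf \in unitmx by rewrite /Pf col_permE unitmx_mul Pcu unitmx_perm.
have MPf : invmx A *m B *m Pf = Pf *m diag_mx (\row_i lam i).
  exact: perm_diag MP.
have char := eig_diag_char Pfu MPf.
have lam_last : lam last < 0.
  have i0le : (s^-1 k0 <= last)%g%N by rewrite /= -ltnS prednK ?ltn_ord // (leq_trans _ hn).
  have := hs _ _ i0le; rewrite permKV => h; rewrite /lam; lra.
have lam_pos : forall i : 'I_n, (i < n.-1)%N -> 0 < lam i.
  move=> i hi; rewrite ltNge; apply/negP => hle.
  apply: (uniq_np (s i) (s last)) => //; last by rewrite /lam in lam_last; lra.
  rewrite (inj_eq perm_inj); apply/eqP => e.
  by move: hi; rewrite e /= ltnn.
exists lam, Pf; split; first by split.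
split; first exact: char.
split; first by move=> i j hij; exact: hs.
split; first by move=> i; have /andP[] := dbound (s i).
split; first exact: lam_pos.
split.
  move=> i hi; have -> : i = last by apply: val_inj.
  by split => //; have /andP[] := dbound (s last).
exists (lam last); split.
  by split => //; apply/char; exists last.
move=> b /char [i ->] hb.
case: (eqVneq i last) => [-> //|il].
have : (i < n.-1)%N.
  rewrite ltn_neqAle; apply/andP; split.
    by apply: contra il => /eqP e; apply/eqP/val_inj.
  by rewrite -ltnS prednK ?ltn_ord // (leq_trans _ hn).
by move=> /lam_pos; lra.
Qed.
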